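(* For all integers $n\ge 1$ and $m\ge 2$, \[ {n+m\brack m}-q^{n}{n+m-2\brack m-2}=K_q(n+m-1,m). \]
   Context: For integers $n\ge m\ge 0$ the Gaussian polynomial is ${n\brack m}=\prod_{i=0}^{m-1}\frac{1-q^{n-i}}{1-q^{m-i}}$. For $n\geq 1$ and $0\le m\le n$, the $q$-Kaplansky number is $K_q(n,m)=\frac{1-q^{n+m}}{1-q^{n}}{n\brack m}$. *)

(* Defs.v *)
From mathcomp Require Import all_boot all_order all_algebra.
From mathcomp Require Import fraction.
Set Implicit Arguments. Unset Strict Implicit. Unset Printing Implicit Defensive.
Import GRing.Theory.
Local Open Scope ring_scope.

Definition gauss (F : fieldType) (q : F) (n m : nat) : F :=
  \prod_(i < m) ((1 - q ^+ (n - i)) / (1 - q ^+ (m - i))).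

Definition qKaplansky (F : fieldType) (q : F) (n m : nat) : F :=
  (1 - q ^+ (n + m)) / (1 - q ^+ n) * gauss q n m.

Definition qX : {fraction {poly rat}} := @FracField.tofrac {poly rat} 'X.

(* Main.v *)
Require Import Defs.
From mathcomp Require Import all_boot all_order all_algebra.
From mathcomp Require Import fraction.
From mathcomp Require Import ring lra zify.
Import GRing.Theory.
Local Open Scope ring_scope.

Section G.
Variable (F : fieldType) (q : F).
Hypothesis qnz : forall k : nat, (0 < k)%N -> 1 - q ^+ k != 0.

Let a (k : nat) := 1 - q ^+ k.

Lemma gauss_split N m : gauss q N m =
  (\prod_(i < m) a (N - i)) / (\prod_(i < m) a (m - i)).
Proof. by rewrite /gauss prodf_div. Qed.

Lemma num2 N k : \prod_(i < k.+2) a (N - i) =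
  a N * a (N - 1) * \prod_(i < k) a (N - 2 - i).
Proof.
rewrite !big_ord_recl /= ?subn0 mulrA; congr (_ * _).
by apply: eq_bigr => i _; rewrite /bump /=; congr a; lia.
Qed.

Lemma num1 N k : \prod_(i < k.+2) a (N - i) =
  a N * \prod_(i < k) a (N - 1 - i) * a (N - k.+1).
Proof.
rewrite big_ord_recl big_ord_recr /= ?subn0 mulrA; congr (_ * _ * _).
by apply: eq_bigr => i _; rewrite /bump /=; congr a; lia.
Qed.

Lemma prod_nz k : \prod_(i < k) a (k - i) != 0.
Proof.
rewrite prodf_seq_neq0; apply/allP => i _ /=; apply: qnz.
have := ltn_ord i; lia.
Qed.

Lemma main_gen n k : (1 <= n)%N ->
  gauss q (n + k.+2) k.+2 - q ^+ n * gauss q (n + k.+2 - 2) k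
  = qKaplansky q (n + k.+2 - 1) k.+2.
Proof.
move=> hn.
rewrite /qKaplansky !gauss_split.
rewrite (num2 (n + k.+2)) (num1 (n + k.+2 - 1)).
rewrite (num2 k.+2 k) ?subn0.
have E1 : (n + k.+2 - 1 - 1 = n + k.+2 - 2)%N by lia.
have E2 : (n + k.+2 - 1 - k.+1 = n)%N by lia.
have E3 : (k.+2 - 2 = k)%N by lia.
rewrite E1 E2.
have -> : \prod_(i < k) a (k.+2 - 2 - i) = \prod_(i < k) a (k - i).
  by apply: eq_bigr => i _; rewrite E3.
set P := \prod_(i < k) a (n + k.+2 - 2 - i).
set D := \prod_(i < k) a (k - i).
have Dnz : D != 0 := prod_nz k.
have h1 : a k.+2 != 0 by apply: qnz.
have h2 : a (k.+2 - 1) != 0 by apply: qnz; lia.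
have h3 : a (n + k.+2 - 1) != 0 by apply: qnz; lia.
rewrite /a in h1 h2 h3 *.
have F1 : (n + k.+2 - 1 + k.+2 = n + k + k + 3)%N by lia.
have F2 : (n + k.+2 - 1 = n + k + 1)%N by lia.
have F3 : (k.+2 - 1 = k + 1)%N by lia.
have F4 : (n + k.+2 = n + k + 2)%N by lia.
rewrite F1 F2 F3 F4 in h1 h2 h3 *.
have F5 : (k.+2 = k + 2)%N by lia.
rewrite F5 in h1 *.
rewrite !exprD in h1 h2 h3 *.
move: h1 h2 h3 Dnz; set x := q ^+ n; set y := q ^+ k => h1 h2 h3 Dnz.
field; rewrite ?h1 ?h2 ?h3 ?Dnz //.
Qed.
End G.

Lemma qX_nz (k : nat) : (0 < k)%N -> 1 - qX ^+ k != 0.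
Proof.
move=> hk.
have -> : 1 - qX ^+ k = FracField.tofrac (1 - 'X^k : {poly rat}).
  by rewrite /qX rmorphB rmorph1 rmorphXn.
rewrite tofrac_eq0; apply/eqP => /(congr1 (fun p : {poly rat} => p.[0])).
rewrite !hornerE expr0n; case: k hk => // k _ /=; rewrite subr0 => /eqP; rewrite oner_eq0.
Qed.

Theorem mainTheorem4 (n m : nat) (hn : (1 <= n)%N) (hm : (2 <= m)%N) :
  gauss qX (n + m) m - qX ^+ n * gauss qX (n + m - 2) (m - 2)
  = qKaplansky qX (n + m - 1) m.
Proof.
case: m hm => [|[|k]] // _.
have -> : (k.+2 - 2 = k)%N by lia.
exact: main_gen qX_nz n k hn.
Qed.
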